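(* Let $n\ge 1$, $D\ge 1$, and let $X_n=\{\mathbf{x}^0,\ldots,\mathbf{x}^{n-1}\}\subseteq\{0,1\}^D$ consist of $n$ pairwise distinct vectors. Let $d=2\lceil\log_2 n\rceil$. Then there exist subsets $S_0,\ldots,S_{d-1}\subseteq\{0,\ldots,D-1\}$ such that the map $\mathbf{f}:\{0,1\}^D\to\{0,1\}^d$ defined by $f_k(\mathbf{x})=\bigoplus_{\ell\in S_k}x_\ell$ (the parity of the entries of $\mathbf{x}$ indexed by $S_k$) satisfies $\mathbf{f}(\mathbf{x}^i)\ne\mathbf{f}(\mathbf{x}^j)$ for all $i\ne j$.
   Context: Such an $\mathbf{f}$ is a two-layer network whose activation functions are parity functions of subsets of the input variables. *)

(* Defs.v *)
From mathcomp Require Import all_boot.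
Set Implicit Arguments. Unset Strict Implicit. Unset Printing Implicit Defensive.

(* ceil(log2 n) is [up_log 2 n] (smallest e with n <= 2^e; 0 for n <= 1). *)

Definition parity (D : nat) (S : {set 'I_D}) (x : {ffun 'I_D -> bool}) : bool :=
  \big[addb/false]_(l in S) x l.

Definition parity_map (D d : nat) (S : 'I_d -> {set 'I_D})
  (x : {ffun 'I_D -> bool}) : {ffun 'I_d -> bool} :=
  [ffun k => parity (S k) x].

(* Main.v *)
Require Import Defs.
From mathcomp Require Import all_boot.
Set Implicit Arguments. Unset Strict Implicit.

Section Aux.
Variable D : nat.
Implicit Types (x y v : {ffun 'I_D -> bool}) (T : {set 'I_D}).

Lemma parity_xor T x y :
  parity T x (+) parity T y = parity T [ffun l => x l (+) y l].
Proof.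
rewrite /parity -big_split /=; apply: eq_bigr => l _; by rewrite ffunE.
Qed.

Definition toggle (l : 'I_D) T := if l \in T then T :\ l else l |: T.

Lemma toggleK l : involutive (toggle l).
Proof.
move=> T; rewrite /toggle; case: (boolP (l \in T)) => H.
  rewrite setD11; apply/setP => z; rewrite !inE; case: eqP => // ->; by rewrite H.
rewrite setU11; apply/setP => z; rewrite !inE; case: eqP => // ->; by rewrite (negPf H).
Qed.

Lemma parity_toggle l v T : v l = true -> parity (toggle l T) v = ~~ parity T v.
Proof.
move=> vl; rewrite /toggle /parity; case: (boolP (l \in T)) => H.
  by rewrite [in RHS](big_setD1 _ H) vl /= negbK.
by rewrite (big_setU1 _ H) vl.
Qed.

Lemma half_count v : v != [ffun=> false] ->
  2 * (\sum_(T : {set 'I_D}) ~~ parity T v) = #|{: {set 'I_D}}|.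
Proof.
move=> nz.
have [l vl] : exists l, v l = true.
  case: (boolP [exists l, v l]) => [/existsP[l Hl]|/existsPn H]; first by exists l; apply: Hl.
  case/eqP: nz; apply/ffunP => z; rewrite ffunE; exact/negbTE/H.
have E : \sum_(T : {set 'I_D}) (parity T v : nat) = \sum_(T : {set 'I_D}) ~~ parity T v.
  rewrite (reindex_inj (can_inj (toggleK l))) /=.
  by apply: eq_bigr => T _; rewrite parity_toggle.
rewrite mul2n -addnn -{1}E -big_split /= -sum1_card.
by apply: eq_bigr => T _; case: (parity T v).
Qed.
End Aux.

Section Main.
Variables (n D : nat) (X : 'I_n -> {ffun 'I_D -> bool}).

Definition eqp (S : {set 'I_D}) (p : 'I_n * 'I_n) :=
  parity S (X p.1) == parity S (X p.2).

Lemma step (P : {set 'I_n * 'I_n}) :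
  (forall p, p \in P -> X p.1 != X p.2) ->
  exists S, 2 * #|[set p in P | eqp S p]| <= #|P|.
Proof.
move=> HP.
case: (boolP [exists S, 2 * #|[set p in P | eqp S p]| <= #|P|]) => [/existsP//|/existsPn H].
exfalso.
have tot : 2 * (\sum_(S : {set 'I_D}) #|[set p in P | eqp S p]|) = #|P| * #|{: {set 'I_D}}|.
  have -> : \sum_(S : {set 'I_D}) #|[set p in P | eqp S p]|
          = \sum_(S : {set 'I_D}) \sum_(p in P) (eqp S p : nat).
    apply: eq_bigr => S _; rewrite -sum1dep_card big_mkcond /= [RHS]big_mkcond /=.
    by apply: eq_bigr => p _; case: (p \in P); case: (eqp S p).
  rewrite exchange_big /= big_distrr /= -sum_nat_const; apply: eq_bigr => p Hp.
  have nz : [ffun l => X p.1 l (+) X p.2 l] != [ffun=> false].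
    apply/eqP => E; move/eqP: (HP p Hp); apply; apply/ffunP => l.
    have := congr1 (fun f : {ffun 'I_D -> bool} => f l) E; rewrite !ffunE /=.
    by case: (X p.1 l); case: (X p.2 l).
  rewrite -(half_count nz); congr (2 * _); apply: eq_bigr => S _.
  by rewrite /eqp -parity_xor; case: (parity S (X p.1)); case: (parity S (X p.2)).
have : #|{: {set 'I_D}}| * #|P|.+1 <= 2 * (\sum_(S : {set 'I_D}) #|[set p in P | eqp S p]|).
  rewrite big_distrr /= -sum1_card big_distrl /=; apply: leq_sum => S _.
  by rewrite mul1n ltnNge; apply: H.
rewrite tot mulnS mulnC -{2}(add0n (#|P| * _)) leq_add2r leqn0 => /eqP.
by move/card0_eq => /(_ set0).
Qed.

Definition rem (P0 : {set 'I_n * 'I_n}) (s : seq {set 'I_D}) :=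
  [set p in P0 | all (fun S => eqp S p) s].

Lemma iter_step (P0 : {set 'I_n * 'I_n}) :
  (forall p, p \in P0 -> X p.1 != X p.2) ->
  forall k, exists s, size s = k /\ #|rem P0 s| * 2 ^ k <= #|P0|.
Proof.
move=> HP; elim=> [|k [s [sz Hs]]].
  exists [::]; split => //; rewrite muln1; apply: subset_leq_card.
  by apply/subsetP => p; rewrite inE => /andP[].
have [S HS] : exists S, 2 * #|[set p in rem P0 s | eqp S p]| <= #|rem P0 s|.
  by apply: step => p; rewrite inE => /andP[/HP].
exists (S :: s); split; first by rewrite /= sz.
have -> : rem P0 (S :: s) = [set p in rem P0 s | eqp S p].
  apply/setP => p; rewrite !inE /=; by case: (p \in P0); case: (eqp S p); case: all.
rewrite expnS mulnCA mulnC -mulnA [2 ^ k * 2]mulnC mulnA; apply: leq_trans Hs; by rewrite leq_mul2r (mulnC _ 2) HS orbT.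
Qed.
End Main.

Theorem theorem8 (n D : nat) (hn : 1 <= n) (hD : 1 <= D)
  (X : 'I_n -> {ffun 'I_D -> bool}) (hX : injective X) :
  exists S : 'I_(2 * up_log 2 n) -> {set 'I_D},
    forall i j : 'I_n, i != j -> parity_map S (X i) != parity_map S (X j).
Proof.
set d := 2 * up_log 2 n.
pose P0 := [set p : 'I_n * 'I_n | p.1 != p.2].
have HP : forall p, p \in P0 -> X p.1 != X p.2.
  by move=> p; rewrite inE; apply: contra => /eqP/hX ->.
have [s [sz Hs]] := iter_step HP d.
have card0 : #|rem X P0 s| = 0.
  have lt : #|P0| < 2 ^ d.
    have : #|P0| < n * n.
      have -> : n * n = #|[set: 'I_n * 'I_n]| by rewrite cardsT card_prod card_ord.
      apply: proper_card.
      rewrite properT; apply/eqP => E.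
      have : (Ordinal hn, Ordinal hn) \in P0 by rewrite E inE.
      by rewrite inE eqxx.
    move/leq_trans; apply.
    have h := up_logP n (isT : 1 < 2).
    by rewrite /d mulnC expnM (expnS _ 1) expn1; apply: leq_mul.
  apply/eqP; rewrite -leqn0 leqNgt; apply/negP => H.
  have := leq_trans lt (leq_trans (leq_pmull _ H) Hs); by rewrite ltnn.
exists (fun k => nth set0 s k) => i j ij.
have : (i, j) \notin rem X P0 s.
  by apply/negP => H; have := card0; move/eqP; rewrite cards_eq0 => /eqP E; rewrite E inE in H.
rewrite inE /= inE ij /= => /allPn [S Sin nS].
apply/negP => /eqP E.
have Hk : index S s < d by rewrite -sz index_mem.
have := congr1 (fun f : {ffun 'I_d -> bool} => f (Ordinal Hk)) E; rewrite !ffunE /= nth_index //.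
by move/eqP; apply/negP: nS.
Qed.
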